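(* Let $\mathbb{K}$ be an algebraically closed field with $\operatorname{char}(\mathbb{K})\neq 2$. Let \[ A=\frac{\mathbb{K}\langle x_1,x_2,x_3,x_4\rangle}{\langle g_1,\ldots,g_6\rangle}, \] where \[ g_1=x_1x_2-x_2x_1,\quad g_2=x_3x_2-x_2x_3,\quad g_3=x_1x_3-x_3x_1, \] \[ g_4=x_1x_4-x_4x_1-x_1^2+x_4x_3,\quad g_5=x_2x_4-x_4x_2,\quad g_6=x_3x_4-x_4x_3. \] Then the point scheme of $A$ is $Q\cup L\subset\mathbb{P}^3$, where $Q=\mathcal{V}(x_1^2-x_3x_4)$ and $L=\mathcal{V}(x_2,x_3)$; in particular the line $L$ is tangent to the quadric $Q$ at a nonsingular point of $Q$.
   Context: Point scheme: for a quadratic algebra $A=\mathbb{K}\langle x_1,\dots,x_4\rangle/\langle g_1,\dots,g_6\rangle$ with each $g_i=\sum_{j,k}c_{ijk}x_jx_k$ homogeneous of degree 2, let $D$ be the $6\times 4$ matrix with entries $D_{ik}=\sum_j c_{ijk}x_j$ (linear forms in $x_1,\dots,x_4$), so that $g_i(\alpha,\beta):=\sum_{j,k}c_{ijk}\alpha_j\beta_k=(D(\alpha)\beta)_i$ for $(\alpha,\beta)\in\mathbb{P}^3\times\mathbb{P}^3$. The point scheme of $A$ is the subscheme of $\mathbb{P}^3$ (homogeneous coordinates $x_1,\dots,x_4$) defined by the vanishing of all $4\times 4$ minors of $D$; its points are the $\alpha\in\mathbb{P}^3$ for which there exists $\beta\in\mathbb{P}^3$ with $g_i(\alpha,\beta)=0$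 for all $i$. For homogeneous polynomials $f_1,\dots,f_r$, $\mathcal{V}(f_1,\dots,f_r)$ denotes their zero locus (subscheme) in $\mathbb{P}^3$. *)

(* Defs.v *)
From HB Require Import structures.
From mathcomp Require Import all_boot all_order all_algebra.
From mathcomp Require Import mpoly.
Set Implicit Arguments. Unset Strict Implicit. Unset Printing Implicit Defensive.
Import GRing.Theory.
Local Open Scope ring_scope.

(* Polynomial ring K[x_1,..,x_4]; variable x_(i+1) is 'X_i for i : 'I_4. *)

Definition in_ideal (K : comNzRingType) (n : nat) (I : finType)
    (g : I -> {mpoly K[n]}) (p : {mpoly K[n]}) : Prop :=
  exists a : I -> {mpoly K[n]}, p = \sum_(i : I) a i * g i.

(* Two homogeneous ideals (given as membership predicates) define the same
   closed subscheme of P^(n-1) iff their saturations w.r.t. the irrelevant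
   ideal (x_1,...,x_n) coincide. *)
Definition sat_incl (K : comNzRingType) (n : nat)
    (I J : {mpoly K[n]} -> Prop) : Prop :=
  forall p, I p -> exists N : nat, forall i : 'I_n, J ('X_i ^+ N * p).

Definition same_subscheme (K : comNzRingType) (n : nat)
    (I J : {mpoly K[n]} -> Prop) : Prop :=
  sat_incl I J /\ sat_incl J I.

(* Quadratic algebra with 6 relations g_i = sum_{j,k} c i j k x_j x_k on 4
   generators: the matrix D with D_ik = sum_j c i j k x_j. *)
Definition Dmat (K : comNzRingType) (c : 'I_6 -> 'I_4 -> 'I_4 -> K)
  : 'M[{mpoly K[4]}]_(6, 4) :=
  \matrix_(i < 6, k < 4) \sum_(j < 4) (c i j k)%:MP * 'X_j.

(* The 4x4 minors of D: determinants of the 4x4 submatrices obtained by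
   choosing rows f 0, .., f 3 (non-injective f give 0, all others give the
   minors up to sign). *)
Definition minor4 (K : comNzRingType) (c : 'I_6 -> 'I_4 -> 'I_4 -> K)
  (f : {ffun 'I_4 -> 'I_6}) : {mpoly K[4]} :=
  \det (rowsub f (Dmat c)).

Definition point_scheme_ideal (K : comNzRingType)
  (c : 'I_6 -> 'I_4 -> 'I_4 -> K) : {mpoly K[4]} -> Prop :=
  in_ideal (minor4 c).

(* Coefficients of the relations g_1..g_6 of the statement
   (indices 0..3 stand for x_1..x_4, 0..5 for g_1..g_6). *)
Definition gcoef (K : comNzRingType) (i : 'I_6) (j k : 'I_4) : K :=
  match nat_of_ord i, nat_of_ord j, nat_of_ord k with
  (* g1 = x1x2 - x2x1 *)
  | 0, 0, 1 => 1 | 0, 1, 0 => -1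
  (* g2 = x3x2 - x2x3 *)
  | 1, 2, 1 => 1 | 1, 1, 2 => -1
  (* g3 = x1x3 - x3x1 *)
  | 2, 0, 2 => 1 | 2, 2, 0 => -1
  (* g4 = x1x4 - x4x1 - x1^2 + x4x3 *)
  | 3, 0, 3 => 1 | 3, 3, 0 => -1 | 3, 0, 0 => -1 | 3, 3, 2 => 1
  (* g5 = x2x4 - x4x2 *)
  | 4, 1, 3 => 1 | 4, 3, 1 => -1
  (* g6 = x3x4 - x4x3 *)
  | 5, 2, 3 => 1 | 5, 3, 2 => -1
  | _, _, _ => 0
  end.

Definition x1 {K : comNzRingType} : {mpoly K[4]} := 'X_(@Ordinal 4 0 isT).
Definition x2 {K : comNzRingType} : {mpoly K[4]} := 'X_(@Ordinal 4 1 isT).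
Definition x3 {K : comNzRingType} : {mpoly K[4]} := 'X_(@Ordinal 4 2 isT).
Definition x4 {K : comNzRingType} : {mpoly K[4]} := 'X_(@Ordinal 4 3 isT).

Definition quadQ (K : comNzRingType) : {mpoly K[4]} := x1 ^+ 2 - x3 * x4.

Definition QL_ideal (K : comNzRingType) (p : {mpoly K[4]}) : Prop :=
  in_ideal (fun _ : 'I_1 => quadQ K) p /\
  in_ideal (fun b : bool => if b then x2 else x3) p.

(* Main.v *)
Require Import Defs.
From HB Require Import structures.
From mathcomp Require Import all_boot all_order all_algebra.
From mathcomp Require Import mpoly.
From mathcomp Require Import ring.
Import GRing.Theory.
Local Open Scope ring_scope.

Lemma det_S (R : comNzRingType) n (A : 'M[R]_n.+1) : \det A =
  \sum_(j < n.+1) (-1)^+j * A ord0 j * \det (\matrix_(k, l) A (lift ord0 k) (lift j l)).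
Proof.
rewrite (expand_det_row A ord0); apply: eq_bigr => j _.
rewrite /cofactor add0n mulrA [A _ _ * _]mulrC; congr (_ * \det _).
by apply/matrixP => k l; rewrite !mxE.
Qed.

Lemma det4 (R : comNzRingType) (b : nat -> nat -> R) :
  \det (\matrix_(i < 4, j < 4) b i j) =
(b 0%N 0%N * b 1%N 1%N * b 2%N 2%N * b 3%N 3%N) + (- b 0%N 0%N * b 1%N 1%N * b 2%N 3%N * b 3%N 2%N) + (- b 0%N 0%N * b 1%N 2%N * b 2%N 1%N * b 3%N 3%N) + (b 0%N 0%N * b 1%N 2%N * b 2%N 3%N * b 3%N 1%N) + (b 0%N 0%N * b 1%N 3%N * b 2%N 1%N * b 3%N 2%N) + (- b 0%N 0%N * b 1%N 3%N * b 2%N 2%N * b 3%N 1%N) + (- b 0%N 1%N * b 1%N 0%N * b 2%N 2%N * b 3%N 3%N) + (b 0%N 1%N * b 1%N 0%N * b 2%N 3%N * b 3%N 2%N) + (b 0%N 1%N * b 1%N 2%N * b 2%N 0%N * b 3%N 3%N) + (- b 0%N 1%N * b 1%N 2%N * b 2%N 3%N * b 3%N 0%N) + (- b 0%N 1%N * b 1%N 3%N * b 2%N 0%N * b 3%N 2%N) + (b 0%N 1%N * b 1%N 3%N * b 2%N 2%N * b 3%N 0%N) + (b 0%N 2%N * b 1%N 0%N * b 2%N 1%N * b 3%N 3%N) + (- b 0%N 2%N * b 1%N 0%N * b 2%N 3%N * b 3%N 1%N) + (- b 0%N 2%N * b 1%N 1%N * b 2%N 0%N * b 3%N 3%N) +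 (b 0%N 2%N * b 1%N 1%N * b 2%N 3%N * b 3%N 0%N) + (b 0%N 2%N * b 1%N 3%N * b 2%N 0%N * b 3%N 1%N) + (- b 0%N 2%N * b 1%N 3%N * b 2%N 1%N * b 3%N 0%N) + (- b 0%N 3%N * b 1%N 0%N * b 2%N 1%N * b 3%N 2%N) + (b 0%N 3%N * b 1%N 0%N * b 2%N 2%N * b 3%N 1%N) + (b 0%N 3%N * b 1%N 1%N * b 2%N 0%N * b 3%N 2%N) + (- b 0%N 3%N * b 1%N 1%N * b 2%N 2%N * b 3%N 0%N) + (- b 0%N 3%N * b 1%N 2%N * b 2%N 0%N * b 3%N 1%N) + (b 0%N 3%N * b 1%N 2%N * b 2%N 1%N * b 3%N 0%N)
.
Proof.
rewrite det_S !big_ord_recl big_ord0.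
rewrite !det_S !big_ord_recl !big_ord0.
rewrite !det_S !big_ord_recl !big_ord0.
rewrite !det_S !big_ord_recl !big_ord0 !det_mx00 !mxE /=.
rewrite /bump /= ?(add0n, add1n, addn0, addSn).
ring.
Qed.

Section S.
Variable K : closedFieldType.
Definition X' (k : nat) : {mpoly K[4]} := 'X_(inord k).
Lemma XE (i : 'I_4) : 'X_i = X' i.
Proof. by rewrite /X' inord_val. Qed.

Definition Dn (i k : nat) : {mpoly K[4]} := match i, k with
| 0,0 => - X' 1 | 0,1 => X' 0
| 1,1 => X' 2 | 1,2 => - X' 1
| 2,0 => - X' 2 | 2,2 => X' 0
| 3,0 => - X' 0 - X' 3 | 3,2 => X' 3 | 3,3 => X' 0
| 4,1 => - X' 3 | 4,3 => X' 1
| 5,2 => - X' 3 | 5,3 => X' 2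
| _,_ => 0 end.

Lemma DmatE : Dmat (@gcoef K) = \matrix_(i,k) Dn i k.
Proof.
apply/matrixP=> i k; rewrite !mxE !big_ord_recl big_ord0 !XE.
case: i k => [[|[|[|[|[|[|//]]]]]] Hi] [[|[|[|[|//]]]] Hk];
rewrite /gcoef /bump /= ?add1n ?mpolyC0 ?mpolyC1 ?mpolyCN ?mpolyC1.
all: ring.
Qed.

Lemma ideal_gen n (I : finType) (g : I -> {mpoly K[n]}) i : in_ideal g (g i).
Proof.
exists (fun j => if j == i then 1 else 0).
rewrite (bigD1 i) //= eqxx mul1r big1 ?addr0 // => j /negbTE ->; by rewrite mul0r.
Qed.

Lemma ideal_add n (I : finType) (g : I -> {mpoly K[n]}) p q :
  in_ideal g p -> in_ideal g q -> in_ideal g (p + q).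
Proof.
move=> [a ->] [b ->]; exists (fun i => a i + b i).
by rewrite -big_split /=; apply: eq_bigr => i _; rewrite mulrDl.
Qed.

Lemma ideal_mul n (I : finType) (g : I -> {mpoly K[n]}) r p :
  in_ideal g p -> in_ideal g (r * p).
Proof.
move=> [a ->]; exists (fun i => r * a i).
by rewrite mulr_sumr; apply: eq_bigr => i _; rewrite mulrA.
Qed.

Definition Jm (p : {mpoly K[4]}) := exists u w, p = X' 1 * u + X' 2 * w.

Lemma JmE p : Jm p <-> in_ideal (fun b : bool => if b then x2 else x3) p.
Proof.
rewrite /x2 /x3 !XE /=; split.
  by move=> [u [w ->]]; exists (fun b : bool => if b then u else w); rewrite big_bool /= mulrC [w * _]mulrC.
by move=> [a ->]; exists (a true), (a false); rewrite big_bool /= mulrC [a false * _]mulrC.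
Qed.

Lemma Jm_add p q : Jm p -> Jm q -> Jm (p + q).
Proof. by move=> [u [w ->]] [u' [w' ->]]; exists (u + u'), (w + w'); ring. Qed.
Lemma Jm_mul r p : Jm p -> Jm (r * p).
Proof. by move=> [u [w ->]]; exists (r * u), (r * w); ring. Qed.
Lemma Jm_opp p : Jm p -> Jm (- p).
Proof. by move=> [u [w ->]]; exists (- u), (- w); ring. Qed.


End S.

Lemma adjE (R : comNzRingType) n (M : 'M[R]_n) (v : 'cV_n) k :
  \det M * v k 0 = \sum_j \adj M k j * (M *m v) j 0.
Proof.
have := congr1 (fun A => (A *m v) k 0) (mul_adj_mx M) => /=.
rewrite mul_scalar_mx -mulmxA [in RHS]mxE => <-.
by rewrite mxE.
Qed.

Lemma rowsub_mulE (R : comNzRingType) m n p (f : 'I_p -> 'I_m) (D : 'M[R]_(m, n)) (v : 'cV_n) j :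
  (rowsub f D *m v) j 0 = (D *m v) (f j) 0.
Proof. by rewrite !mxE; apply: eq_bigr => k _; rewrite mxE. Qed.

Section A.
Variable K : closedFieldType.

Definition v1 : 'cV[{mpoly K[4]}]_4 := \col_k 'X_k.

Lemma Dv1 r : (Dmat (@gcoef K) *m v1) r 0 = quadQ K * (if nat_of_ord r == 3%N then -1 else 0).
Proof.
rewrite DmatE !mxE !big_ord_recl big_ord0 !mxE /quadQ /x1 /x3 /x4 !XE.
case: r => [[|[|[|[|[|[|//]]]]]] Hr]; rewrite /bump /= ?add1n; ring.
Qed.

Definition v2n (k : nat) : {mpoly K[4]} := match k with 0 => X' K 0 | 3 => X' K 0 + X' K 3 | _ => 0 end.
Definition v2 : 'cV[{mpoly K[4]}]_4 := \col_k v2n k.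
Definition un (r : nat) : {mpoly K[4]} := match r with 0 => - X' K 0 | 4 => X' K 0 + X' K 3 | _ => 0 end.
Definition wn (r : nat) : {mpoly K[4]} := match r with 2 => - X' K 0 | 5 => X' K 0 + X' K 3 | _ => 0 end.

Lemma Dv2 r : (Dmat (@gcoef K) *m v2) r 0 = X' K 1 * un r + X' K 2 * wn r.
Proof.
rewrite DmatE !mxE !big_ord_recl big_ord0 !mxE.
case: r => [[|[|[|[|[|[|//]]]]]] Hr]; rewrite /bump /= ?add1n; ring.
Qed.

Lemma partA (f : {ffun 'I_4 -> 'I_6}) (i : 'I_4) :
  QL_ideal ('X_i ^+ 1 * minor4 (@gcoef K) f).
Proof.
set M := rowsub f (Dmat (@gcoef K)).
have hd : minor4 (@gcoef K) f = \det M by [].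
rewrite expr1 hd; split.
  have -> : 'X_i * \det M = \det M * v1 i 0 by rewrite mxE mulrC.
  rewrite adjE.
  exists (fun _ => \sum_j \adj M i j * (if nat_of_ord (f j) == 3%N then -1 else 0)).
  rewrite big_ord1 mulr_suml; apply: eq_bigr => j _.
  by rewrite /M rowsub_mulE Dv1; ring.
have H k : Jm K (\det M * v2 k 0).
  rewrite adjE; exists (\sum_j \adj M k j * un (f j)), (\sum_j \adj M k j * wn (f j)).
  rewrite !mulr_sumr -big_split /=; apply: eq_bigr => j _.
  by rewrite /M rowsub_mulE Dv2; ring.
apply/JmE.
case: i => [[|[|[|[|//]]]] Hi].
- have := H ord0; rewrite mxE /= XE /=.
  by rewrite mulrC.
- by exists (\det M), 0; rewrite XE /=; ring.
- by exists 0, (\det M); rewrite XE /=; ring.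
- have := @Jm_add K _ _ (H ord_max) (@Jm_opp K _ (H ord0)).
  rewrite !mxE /= XE /=.
  by have -> : \det M * (X' K 0 + X' K 3) + - (\det M * X' K 0) = X' K 3 * \det M by ring.
Qed.
End A.

Section B.
Variable K : closedFieldType.
Definition lq : 4.-tuple {mpoly K[4]} := [tuple X' K 0; 0; 0; X' K 3].

Lemma Jsig p : Jm K (p - (p \mPo lq)).
Proof.
elim/mpolyind: p => [|c m p _ _ IH].
  rewrite raddf0; exists 0, 0; ring.
rewrite raddfD /= comp_mpolyZ.
have -> : c *: 'X_[m] + p - (c *: ('X_[m] \mPo lq) + (p \mPo lq)) =
   c%:MP * ('X_[m] - ('X_[m] \mPo lq)) + (p - (p \mPo lq)).
  by rewrite -!mul_mpolyC; ring.
apply: Jm_add => //; apply: Jm_mul.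
rewrite comp_mpolyX {1}mpolyXE_id !big_ord_recl !big_ord0 !XE /tnth /=.
rewrite /bump /= ?add1n.
move: (m ord0) (m (lift ord0 ord0)) (m (lift ord0 (lift ord0 ord0))) (m (lift ord0 (lift ord0 (lift ord0 ord0)))) => a [|b] [|d] e.
- by exists 0, 0; rewrite !expr0; ring.
- by exists 0, (X' K 0 ^+ a * X' K 2 ^+ d * X' K 3 ^+ e); rewrite !expr0 !exprS !mul0r; ring.
- by exists (X' K 0 ^+ a * X' K 1 ^+ b * X' K 3 ^+ e), 0; rewrite !expr0 !exprS !mul0r; ring.
- by exists (X' K 0 ^+ a * X' K 1 ^+ b * X' K 2 ^+ d.+1 * X' K 3 ^+ e), 0; rewrite [X' K 1 ^+ _]exprS !exprS !mul0r; ring.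
Qed.

Lemma sig_X (k : nat) : (k < 4)%N -> X' K k \mPo lq = lq`_k.
Proof. by move=> hk; rewrite /X' comp_mpolyXU inordK. Qed.

Lemma sigM p q : (p * q) \mPo lq = (p \mPo lq) * (q \mPo lq).
Proof. exact: (rmorphM (comp_mpoly lq)). Qed.
Lemma sigD p q : (p + q) \mPo lq = (p \mPo lq) + (q \mPo lq).
Proof. exact: (raddfD (comp_mpoly lq)). Qed.
Lemma sigN p : (- p) \mPo lq = - (p \mPo lq).
Proof. exact: (raddfN (comp_mpoly lq)). Qed.

Lemma a_in_J a b c : a * quadQ K = X' K 1 * b + X' K 2 * c -> Jm K a.
Proof.
move=> e.
have hs := congr1 (comp_mpoly lq) e.
move: hs; rewrite /quadQ /x1 /x3 /x4 !XE /=.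
rewrite !(sigM, sigD, sigN).
rewrite (sig_X 0) // (sig_X 1) // (sig_X 2) // (sig_X 3) //= !mul0r addr0 subr0.
move/eqP; rewrite mulf_eq0 => /orP [/eqP h0|].
  have -> : a = (a - (a \mPo lq)) by rewrite h0 subr0.
  exact: Jsig.
move=> /eqP h; exfalso.
have := congr1 (meval (fun _ => (1 : K))) h.
by rewrite mevalM /X' mevalXU mulr1 meval0 => /eqP; rewrite oner_eq0.
Qed.

Lemma minor_rows (s : seq nat) : all (fun x => x < 6)%N s ->
  minor4 (@gcoef K) [ffun r : 'I_4 => (inord (nth 0%N s r) : 'I_6)] =
  \det (\matrix_(i < 4, j < 4) Dn K (nth 0%N s i) j).
Proof.
move=> hs; rewrite /minor4 DmatE; congr (\det _); apply/matrixP => i j.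
rewrite !mxE ffunE inordK //.
case: (ltnP i (size s)) => [/(all_nthP 0%N hs)//|le].
by rewrite nth_default.
Qed.

Lemma minor_in (s : seq nat) : all (fun x => x < 6)%N s ->
  in_ideal (minor4 (@gcoef K)) (\det (\matrix_(i < 4, j < 4) Dn K (nth 0%N s i) j)).
Proof. by move=> hs; rewrite -minor_rows //; apply: ideal_gen. Qed.

Lemma in_ideal_eq n (I : finType) (g : I -> {mpoly K[n]}) p q :
  in_ideal g p -> p = q -> in_ideal g q.
Proof. by move=> h <-. Qed.

Lemma minor_c (s : seq nat) (c q : {mpoly K[4]}) : all (fun x => x < 6)%N s ->
  c * \det (\matrix_(i < 4, j < 4) Dn K (nth 0%N s i) j) = q ->
  in_ideal (minor4 (@gcoef K)) q.
Proof. by move=> hs <-; apply: ideal_mul; apply: minor_in. Qed.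

Ltac mintac s c :=
  apply: (@minor_c s c) => //;
  rewrite (@det4 _ (fun x y => Dn K (nth 0%N s x) y)) /Dn /quadQ /x1 /x3 /x4 !XE /=; ring.

Lemma QXmin (i : 'I_4) :
  in_ideal (minor4 (@gcoef K)) (X' K i * quadQ K * X' K 1) /\
  in_ideal (minor4 (@gcoef K)) (X' K i * quadQ K * X' K 2).
Proof.
case: i => [[|[|[|[|//]]]] Hi] /=; split.
- mintac [:: 0; 2; 3; 4]%N (-1 : {mpoly K[4]}).
- mintac [:: 0; 2; 3; 5]%N (-1 : {mpoly K[4]}).
- mintac [:: 0; 1; 3; 4]%N (1 : {mpoly K[4]}).
- mintac [:: 0; 1; 3; 5]%N (1 : {mpoly K[4]}).
- mintac [:: 0; 1; 3; 5]%N (1 : {mpoly K[4]}).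
- mintac [:: 1; 2; 3; 5]%N (-1 : {mpoly K[4]}).
- mintac [:: 0; 3; 4; 5]%N (1 : {mpoly K[4]}).
- mintac [:: 2; 3; 4; 5]%N (1 : {mpoly K[4]}).
Qed.

Lemma partB p : QL_ideal p -> forall i : 'I_4, point_scheme_ideal (@gcoef K) ('X_i ^+ 1 * p).
Proof.
move=> [[a0 ha] /JmE [b [c hb]]] i.
rewrite big_ord1 in ha.
have [u [w hu]] : Jm K (a0 ord0) by apply: (@a_in_J _ b c); rewrite -ha.
have [h1 h2] := QXmin i.
have -> : 'X_i ^+ 1 * p = u * (X' K i * quadQ K * X' K 1) + w * (X' K i * quadQ K * X' K 2).
  by rewrite expr1 ha hu XE; ring.
by apply: ideal_add; apply: ideal_mul.
Qed.
End B.

Section T.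
Variable K : closedFieldType.

Lemma dX (i j : 'I_4) (v : 'I_4 -> K) :
  (mderiv i ('X_j : {mpoly K[4]})).@[v] = ((j == i) : nat)%:R.
Proof.
rewrite mderivX mevalZ mnm1E; case: eqP => [->|_]; last by rewrite mul0r.
have -> : (U_(i) - U_(i))%MM = 0%MM by apply/mnmP => k; rewrite mnmBE subnn mnm0E.
by rewrite mpolyX0 meval1 mulr1.
Qed.

Definition P0 : 'I_4 -> K := fun i => if nat_of_ord i == 3%N then 1 else 0.

Lemma dQP (i : 'I_4) : (mderiv i (quadQ K)).@[P0] = - (((@Ordinal 4 2 isT) == i) : nat)%:R.
Proof.
rewrite /quadQ expr2 mderivB !mderivM mevalB mevalD !mevalD !mevalM !dX /x1 /x3 /x4 !mevalXU /P0 /=.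
ring.
Qed.

Lemma QL0 : @QL_ideal K 0.
Proof.
split; [exists (fun _ => 0) | exists (fun _ => 0)]; by rewrite big1 // => *; rewrite mul0r.
Qed.

Lemma QLadd p q : @QL_ideal K p -> @QL_ideal K q -> @QL_ideal K (p + q).
Proof. by move=> [h1 h2] [h3 h4]; split; apply: ideal_add. Qed.

Lemma QLmul r p : @QL_ideal K p -> @QL_ideal K (r * p).
Proof. by move=> [h1 h2]; split; apply: ideal_mul. Qed.

End T.

Theorem proposition4 (K : closedFieldType) (hK : 2 \notin [pchar K]) :
  (* the point scheme of A equals Q u L as subschemes of P^3 *)
  same_subscheme (point_scheme_ideal (@gcoef K)) (@QL_ideal K) /\
  (* L is tangent to Q at a nonsingular point of Q *)
  exists p : 'I_4 -> K,
    [/\ (exists i, p i != 0),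
        (quadQ K).@[p] = 0, (@x2 K).@[p] = 0 /\ (@x3 K).@[p] = 0,
        (exists i, (mderiv i (quadQ K)).@[p] != 0)
      & forall q : 'I_4 -> K, (@x2 K).@[q] = 0 -> (@x3 K).@[q] = 0 ->
          \sum_(i < 4) (mderiv i (quadQ K)).@[p] * q i = 0].
Proof.
split.
  split.
    move=> p [a ->]; exists 1%N => i.
    rewrite mulr_sumr; apply: (big_ind (@QL_ideal K)).
    - exact: QL0.
    - exact: QLadd.
    - by move=> f _; rewrite mulrCA; apply: QLmul; apply: partA.
  by move=> p hp; exists 1%N; apply: partB.
exists (P0 K); split.
- by exists (@Ordinal 4 3 isT); rewrite /P0 /= oner_eq0.
- by rewrite /quadQ expr2 mevalB !mevalM /x1 /x3 /x4 !mevalXU /P0 /=; ring.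
- by rewrite /x2 /x3 !mevalXU /P0.
- by exists (@Ordinal 4 2 isT); rewrite dQP eqxx oppr_eq0 oner_eq0.
move=> q _ h3.
rewrite (bigD1 (@Ordinal 4 2 isT)) //= big1 => [|j hj].
  by rewrite dQP eqxx addr0; move: h3; rewrite /x3 mevalXU => ->; rewrite mulr0.
by rewrite dQP eq_sym (negbTE hj) oppr0 mul0r.
Qed.
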